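(* There is an absolute constant $C>0$ such that for every $r\ge1$ and all $j,l\in\{0,\ldots,r-1\}$, the local coherences satisfy $$\mu(j,l)\le C\,2^{-j}\,2^{-|j-l|/2}.$$
   Context: Let $n=2^r$, $\mathcal{F}x(\omega)=\frac{1}{\sqrt n}\sum_{t=0}^{n-1}x(t)e^{2\pi i\omega t/n}$ for $x\in\mathbb{C}^n$. Haar vectors: $\psi(t)=2^{-r/2}$ ($0\le t<2^r$); for $l=0,\ldots,r-1$, $p=0,\ldots,2^l-1$: $\phi_{l,p}(t)=2^{(l-r)/2}$ if $p2^{r-l}\le t<(p+\tfrac12)2^{r-l}$, $-2^{(l-r)/2}$ if $(p+\tfrac12)2^{r-l}\le t<(p+1)2^{r-l}$, $0$ otherwise. Frequency bands: $W_0=\{0,1\}$, $W_j=\{-2^j+1,\ldots,-2^{j-1}\}\cup\{2^{j-1}+1,\ldots,2^j\}$ for $j=1,\ldots,r-1$. For $j,l\in\{0,\ldots,r-1\}$, $U_{jl}$ is the matrix with rows indexed by $\omega\in W_j$ and: for $l\ge1$, columns indexed by $p=0,\ldots,2^l-1$ with entries $(U_{jl})_{\omega,p}=\mathcal{F}\phi_{l,p}(\omega)$; for $l=0$, two columns with entries $(U_{j0})_{\omega,0}=\mathcal{F}\psi(\omega)$, $(U_{j0})_{\omega,1}=\mathcal{F}\phi_{0,0}(\omega)$. (These are the blocks of $U=F\Phi$, where $F$ is the DFT matrix with rows indexed by $\omega\in\{-n/2+1,\ldots,n/2\}$ and $\Phi$ has the Haar vectors as columns in the order $\psi,\phi_{0,0},\phi_{1,0},\phi_{1,1},\ldots$.)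 For a matrix $V$, its coherence is $\mu(V)=\max_{a,b}|V_{a,b}|^2$. The $(j,l)$-th local coherence is $\mu(j,l)=\sqrt{\mu(U_{jl})}\,\max_{l'=0,\ldots,r-1}\sqrt{\mu(U_{jl'})}$. *)

(* Defs.v *)
From Stdlib Require Import Reals ZArith List Lia.
From Coquelicot Require Import Coquelicot.
Open Scope R_scope.

Definition csum (m : nat) (f : nat -> C) : C :=
  fold_right Cplus (RtoC 0) (map f (seq 0 m)).

Definition cexpi (theta : R) : C := (cos theta, sin theta).

Definition dft (r : nat) (x : nat -> C) (w : Z) : C :=
  let n := (2 ^ r)%nat in
  Cmult (RtoC (/ sqrt (INR n)))
    (csum n (fun t => Cmult (x t) (cexpi (2 * PI * IZR w * INR t / INR n)))).

Definition haar_psi (r : nat) (t : nat) : C := RtoC (/ sqrt (2 ^ r)).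

(* phi_{l,p}(t) = 2^{(l-r)/2} on [p 2^{r-l}, (p+1/2) 2^{r-l}),
   -2^{(l-r)/2} on [(p+1/2) 2^{r-l}, (p+1) 2^{r-l}), 0 otherwise *)
Definition haar_phi (r l p : nat) (t : nat) : C :=
  let blk := (2 ^ (r - l))%nat in
  let a := sqrt (2 ^ l / 2 ^ r) in
  if andb (Nat.leb (p * blk) t) (Nat.ltb (2 * t) (2 * p * blk + blk))%nat
  then RtoC a
  else if andb (Nat.leb (2 * p * blk + blk) (2 * t)) (Nat.ltb t ((p + 1) * blk))%nat
  then RtoC (- a)
  else RtoC 0.

(* Integers a, a+1, ..., b (empty if b < a) *)
Definition zrange (a b : Z) : list Z :=
  map (fun k => (a + Z.of_nat k)%Z) (seq 0 (Z.to_nat (b - a + 1))).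

Definition band (j : nat) : list Z :=
  match j with
  | O => (0 :: 1 :: nil)%Z
  | S _ =>
      zrange (- 2 ^ Z.of_nat j + 1)%Z (- 2 ^ (Z.of_nat j - 1))%Z
      ++ zrange (2 ^ (Z.of_nat j - 1) + 1)%Z (2 ^ Z.of_nat j)%Z
  end.

(* Columns of the block U_{jl}: the Haar vectors at level l *)
Definition level_vectors (r l : nat) : list (nat -> C) :=
  match l with
  | O => haar_psi r :: haar_phi r 0 0 :: nil
  | S _ => map (fun p => haar_phi r l p) (seq 0 (2 ^ l))
  end.

(* max of a list of reals (entries are nonnegative; lists are nonempty) *)
Definition lmax (s : list R) : R := fold_right Rmax 0 s.

Definition block_coherence (r j l : nat) : R :=
  lmax (flat_map (fun w =>
          map (fun v => (Cmod (dft r v w)) ^ 2) (level_vectors r l))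
        (band j)).

Definition local_coherence (r j l : nat) : R :=
  sqrt (block_coherence r j l) *
  lmax (map (fun l' => sqrt (block_coherence r j l')) (seq 0 r)).

(* Main.v *)
Require Import Defs.
From Stdlib Require Import Reals ZArith List Lra Lia.
From Coquelicot Require Import Coquelicot.
Open Scope R_scope.

Definition gsum (s m : nat) (f : nat -> C) : C :=
  fold_right Cplus (RtoC 0) (map f (seq s m)).

Lemma gsum_S s m f : gsum s (S m) f = Cplus (f s) (gsum (S s) m f).
Proof. reflexivity. Qed.

Lemma gsum_0 s f : gsum s 0 f = RtoC 0.
Proof. reflexivity. Qed.

Lemma gsum_add s a b f : gsum s (a + b) f = Cplus (gsum s a f) (gsum (s + a) b f).
Proof.
  revert s; induction a as [|a IH]; intros s.
  - rewrite gsum_0, Nat.add_0_r. simpl. ring.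
  - simpl (S a + b)%nat. rewrite !gsum_S, IH.
    replace (S s + a)%nat with (s + S a)%nat by lia. ring.
Qed.

Lemma gsum_ext s m f g : (forall t, (s <= t < s + m)%nat -> f t = g t) ->
  gsum s m f = gsum s m g.
Proof.
  revert s; induction m as [|m IH]; intros s H.
  - reflexivity.
  - rewrite !gsum_S. rewrite (H s) by lia. rewrite (IH (S s)); [reflexivity|].
    intros t Ht; apply H; lia.
Qed.

Lemma gsum_scal s m c f : gsum s m (fun t => Cmult c (f t)) = Cmult c (gsum s m f).
Proof.
  revert s; induction m as [|m IH]; intros s.
  - rewrite !gsum_0. ring.
  - rewrite !gsum_S, IH. ring.
Qed.

Lemma gsum_zero s m : gsum s m (fun _ => RtoC 0) = RtoC 0.
Proof.
  revert s; induction m as [|m IH]; intros s; [reflexivity|].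
  rewrite gsum_S, IH. ring.
Qed.

Lemma gsum_const s m c : gsum s m (fun _ => c) = Cmult (RtoC (INR m)) c.
Proof.
  revert s; induction m as [|m IH]; intros s.
  - rewrite gsum_0. simpl. ring.
  - rewrite gsum_S, IH, S_INR. rewrite RtoC_plus. ring.
Qed.

Fixpoint zpow (z : C) (k : nat) : C :=
  match k with O => RtoC 1 | S k => Cmult z (zpow z k) end.

Lemma zpow_add z a b : zpow z (a + b) = Cmult (zpow z a) (zpow z b).
Proof. induction a as [|a IH]; simpl; [ring| rewrite IH; ring]. Qed.

Lemma geo z s m : Cmult (Cminus (RtoC 1) z) (gsum s m (zpow z)) =
  Cminus (zpow z s) (zpow z (s + m)).
Proof.
  revert s; induction m as [|m IH]; intros s.
  - rewrite gsum_0, Nat.add_0_r. ring.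
  - rewrite gsum_S.
    transitivity (Cplus (Cmult (Cminus (RtoC 1) z) (zpow z s))
       (Cmult (Cminus (RtoC 1) z) (gsum (S s) m (zpow z)))); [ring|].
    rewrite IH. replace (S s + m)%nat with (s + S m)%nat by lia. simpl. ring.
Qed.

Lemma cexpi_add a b : cexpi (a + b) = Cmult (cexpi a) (cexpi b).
Proof.
  unfold cexpi, Cmult; simpl. rewrite cos_plus, sin_plus. f_equal; ring.
Qed.

Lemma cexpi_0 : cexpi 0 = RtoC 1.
Proof. unfold cexpi. rewrite cos_0, sin_0. reflexivity. Qed.

Lemma cexpi_nat x t : cexpi (x * INR t) = zpow (cexpi x) t.
Proof.
  induction t as [|t IH].
  - simpl. rewrite Rmult_0_r. apply cexpi_0.
  - rewrite S_INR. replace (x * (INR t + 1)) with (x + x * INR t) by ring.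
    rewrite cexpi_add, IH. reflexivity.
Qed.

Definition nrm2 (z : C) : R := fst z ^ 2 + snd z ^ 2.

Lemma nrm2_mult a b : nrm2 (Cmult a b) = nrm2 a * nrm2 b.
Proof. destruct a, b. unfold nrm2, Cmult; simpl. ring. Qed.

Lemma nrm2_Cmod z : Cmod z ^ 2 = nrm2 z.
Proof. unfold Cmod, nrm2. rewrite pow2_sqrt; [reflexivity|]. nra. Qed.

Lemma nrm2_ge0 z : 0 <= nrm2 z.
Proof. unfold nrm2. nra. Qed.

Lemma nrm2_cexpi x : nrm2 (cexpi x) = 1.
Proof. unfold nrm2, cexpi; simpl. pose proof (sin2_cos2 x). unfold Rsqr in H. nra. Qed.

Lemma nrm2_zpow_cexpi x k : nrm2 (zpow (cexpi x) k) = 1.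
Proof.
  induction k as [|k IH]; simpl.
  - unfold nrm2; simpl. ring.
  - rewrite nrm2_mult, IH, nrm2_cexpi. ring.
Qed.

Lemma nrm2_1m x : nrm2 (Cminus (RtoC 1) (cexpi x)) = 2 - 2 * cos x.
Proof. unfold nrm2, cexpi, Cminus, Cplus, Copp; simpl. pose proof (sin2_cos2 x). unfold Rsqr in H. nra. Qed.

Lemma nrm2_RtoC a : nrm2 (RtoC a) = a ^ 2.
Proof. unfold nrm2; simpl. ring. Qed.
Lemma sin_lb3 y : 0 <= y -> y <= 4 -> y - y^3/6 <= sin y.
Proof.
  intros H1 H2. destruct (pre_sin_bound y 0 H1 H2) as [H _].
  unfold sin_approx, sin_term in H. simpl in H. lra.
Qed.
Lemma sin_sq_le y : sin y ^ 2 <= y ^ 2.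
Proof.
  assert (K: forall y, 0 <= y -> sin y ^ 2 <= y ^ 2).
  { intros u Hu. destruct (Req_dec u 0) as [->|Hn]. rewrite sin_0. lra.
    assert (A := sin_lt_x u ltac:(lra)).
    assert (B: -u <= sin u).
    { destruct (Rle_dec u 1). pose proof (sin_ge_0 u Hu ltac:(pose proof PI2_1; lra)). lra.
      pose proof (SIN_bound u). lra. }
    nra. }
  destruct (Rle_dec 0 y). apply K; lra.
  replace (sin y ^ 2) with (sin (-y) ^ 2) by (rewrite sin_neg; ring).
  replace (y ^ 2) with ((-y) ^ 2) by ring. apply K; lra.
Qed.

Lemma one_m_cos x : 2 - 2 * cos x = 4 * sin (x/2) ^ 2.
Proof.
  replace x with (2 * (x/2)) at 1 by field. rewrite cos_2a_sin. ring.
Qed.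

Lemma T1 x : 2 - 2 * cos x <= x ^ 2.
Proof. rewrite one_m_cos. pose proof (sin_sq_le (x/2)). nra. Qed.

Lemma T2 x : 2 - 2 * cos x <= 4.
Proof. pose proof (COS_bound x). lra. Qed.

Lemma T0 x : 0 <= 2 - 2 * cos x.
Proof. pose proof (COS_bound x). lra. Qed.

Lemma T3 x : Rabs x <= PI -> x ^ 2 / 9 <= 2 - 2 * cos x.
Proof.
  intros H. rewrite one_m_cos.
  assert (K: forall y, 0 <= y <= PI/2 -> y^2/9 <= sin y ^ 2).
  { intros y [H1 H2]. pose proof PI_4.
    pose proof (sin_lb3 y H1 ltac:(lra)).
    assert (y^2 <= 4) by nra.
    assert (y/3 <= sin y) by nra. nra. }
  destruct (Rle_dec 0 x).
  - rewrite Rabs_right in H by lra. pose proof (K (x/2) ltac:(lra)). nra.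
  - rewrite Rabs_left in H by lra. pose proof (K (-x/2) ltac:(lra)).
    replace (-x/2) with (-(x/2)) in H0 by field. rewrite sin_neg in H0. nra.
Qed.

Ltac haar_cases := unfold haar_phi;
  repeat match goal with
  | |- context [Nat.leb ?a ?b] => destruct (Nat.leb_spec a b)
  | |- context [Nat.ltb ?a ?b] => destruct (Nat.ltb_spec a b)
  end; simpl; try reflexivity; try (exfalso; nia).

Lemma phi_sum r l p h z :
  (2 ^ (r - l) = 2 * h)%nat -> ((p + 1) * 2 ^ (r - l) <= 2 ^ r)%nat ->
  csum (2 ^ r) (fun t => Cmult (haar_phi r l p t) (zpow z t)) =
  Cmult (RtoC (sqrt (2 ^ l / 2 ^ r)))
    (Cminus (gsum (p * (2*h)) h (zpow z)) (gsum (p * (2*h) + h) h (zpow z))).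
Proof.
  intros HB Hp.
  change (csum (2 ^ r) ?f) with (gsum 0 (2 ^ r) f).
  set (a := sqrt (2 ^ l / 2 ^ r)).
  replace (2 ^ r)%nat with (p * (2*h) + h + h + (2^r - (p+1)*(2*h)))%nat by (rewrite <- HB; nia).
  rewrite !gsum_add. simpl (0 + _)%nat.
  rewrite (gsum_ext _ _ _ (fun _ => RtoC 0)).
  2:{ intros t Ht. unfold haar_phi; cbv zeta; rewrite HB; haar_cases. ring. }
  rewrite (gsum_ext (p * (2*h)) _ _ (fun t => Cmult (RtoC a) (zpow z t))).
  2:{ intros t Ht. unfold haar_phi; cbv zeta; rewrite HB; haar_cases. }
  rewrite (gsum_ext (p * (2*h) + h) _ _ (fun t => Cmult (RtoC (-a)) (zpow z t))).
  2:{ intros t Ht. unfold haar_phi; cbv zeta; rewrite HB; haar_cases. }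
  rewrite (gsum_ext (p * (2*h) + h + h) _ _ (fun _ => RtoC 0)).
  2:{ intros t Ht. unfold haar_phi; cbv zeta; rewrite HB; haar_cases. ring. }
  rewrite !gsum_zero, !gsum_scal. rewrite RtoC_opp. ring.
Qed.

Lemma cexpi_2pik k : cexpi (2 * PI * IZR k) = RtoC 1.
Proof.
  assert (K: forall m, cexpi (2 * PI * INR m) = RtoC 1).
  { intros m. unfold cexpi.
    replace (2 * PI * INR m) with (0 + 2 * INR m * PI) by ring.
    rewrite cos_period, sin_period, cos_0, sin_0. reflexivity. }
  destruct (Z_le_gt_dec 0 k).
  - rewrite <- (Z2Nat.id k) by lia. rewrite <- INR_IZR_INZ. apply K.
  - replace k with (- Z.of_nat (Z.to_nat (- k)))%Z by lia.
    rewrite opp_IZR, <- INR_IZR_INZ.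
    generalize (K (Z.to_nat (-k))). unfold cexpi.
    replace (2 * PI * - INR (Z.to_nat (- k))) with (- (2 * PI * INR (Z.to_nat (- k)))) by ring.
    rewrite cos_neg, sin_neg. intros H. injection H as H1 H2. rewrite H1, H2.
    unfold RtoC. f_equal. lra.
Qed.

Definition th (r : nat) (w : Z) : R := 2 * PI * IZR w / INR (2 ^ r).

Lemma INR_2pow k : INR (2 ^ k) = 2 ^ k.
Proof. rewrite pow_INR. simpl. f_equal; ring. Qed.

Lemma dft_eq r v w : dft r v w = Cmult (RtoC (/ sqrt (INR (2 ^ r))))
   (csum (2 ^ r) (fun t => Cmult (v t) (zpow (cexpi (th r w)) t))).
Proof.
  unfold dft. f_equal. change (csum (2 ^ r) ?f) with (gsum 0 (2 ^ r) f).
  apply gsum_ext. intros t _. f_equal. rewrite <- cexpi_nat. unfold th. f_equal.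
  unfold Rdiv. ring.
Qed.

Lemma nrm2_dft r v w : nrm2 (dft r v w) =
  nrm2 (csum (2 ^ r) (fun t => Cmult (v t) (zpow (cexpi (th r w)) t))) / 2 ^ r.
Proof.
  rewrite dft_eq, nrm2_mult, nrm2_RtoC, INR_2pow.
  assert (0 < 2 ^ r) by (apply pow_lt; lra).
  rewrite pow_inv. rewrite <- (Rsqr_pow2 (sqrt _)), Rsqr_sqrt by lra.
  unfold Rdiv. ring.
Qed.

Lemma phi_W r l p h x :
  (2 ^ (r - l) = 2 * h)%nat -> ((p + 1) * 2 ^ (r - l) <= 2 ^ r)%nat ->
  (2 - 2 * cos x) * nrm2 (csum (2 ^ r) (fun t => Cmult (haar_phi r l p t) (zpow (cexpi x) t)))
  = (2 ^ l / 2 ^ r) * (2 - 2 * cos (x * INR h)) ^ 2.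
Proof.
  intros HB Hp. rewrite (phi_sum r l p h _ HB Hp).
  set (z := cexpi x). set (s := (p * (2 * h))%nat).
  assert (E: Cmult (Cminus (RtoC 1) z)
     (Cmult (RtoC (sqrt (2 ^ l / 2 ^ r))) (Cminus (gsum s h (zpow z)) (gsum (s + h) h (zpow z))))
   = Cmult (RtoC (sqrt (2 ^ l / 2 ^ r))) (Cmult (zpow z s)
        (Cmult (Cminus (RtoC 1) (zpow z h)) (Cminus (RtoC 1) (zpow z h))))).
  { transitivity (Cmult (RtoC (sqrt (2 ^ l / 2 ^ r)))
       (Cminus (Cmult (Cminus (RtoC 1) z) (gsum s h (zpow z)))
               (Cmult (Cminus (RtoC 1) z) (gsum (s + h) h (zpow z))))); [ring|].
    rewrite !geo. rewrite !zpow_add. ring. }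
  rewrite <- nrm2_1m. fold z. rewrite <- nrm2_mult, E.
  rewrite !nrm2_mult, nrm2_RtoC. unfold z. rewrite nrm2_zpow_cexpi, <- cexpi_nat, nrm2_1m.
  rewrite <- Rsqr_pow2, Rsqr_sqrt.
  - ring.
  - apply Rmult_le_pos; [apply pow_le; lra| left; apply Rinv_0_lt_compat, pow_lt; lra].
Qed.

Lemma phi_zero r l p h :
  (2 ^ (r - l) = 2 * h)%nat -> ((p + 1) * 2 ^ (r - l) <= 2 ^ r)%nat ->
  csum (2 ^ r) (fun t => Cmult (haar_phi r l p t) (zpow (RtoC 1) t)) = RtoC 0.
Proof.
  intros HB Hp. rewrite (phi_sum r l p h _ HB Hp).
  assert (K: forall t, zpow (RtoC 1) t = RtoC 1).
  { induction t; simpl; [reflexivity| rewrite IHt; ring]. }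
  rewrite !(gsum_ext _ _ (zpow (RtoC 1)) (fun _ => RtoC 1)) by (intros; apply K).
  rewrite !gsum_const. ring.
Qed.

Lemma psi_W r x :
  (2 - 2 * cos x) * nrm2 (csum (2 ^ r) (fun t => Cmult (haar_psi r t) (zpow (cexpi x) t)))
  = (/ 2 ^ r) * (2 - 2 * cos (x * INR (2 ^ r))).
Proof.
  change (csum (2 ^ r) ?f) with (gsum 0 (2 ^ r) f). unfold haar_psi.
  rewrite gsum_scal. rewrite <- nrm2_1m, <- nrm2_mult.
  replace (Cmult (Cminus (RtoC 1) (cexpi x)) (Cmult (RtoC (/ sqrt (2 ^ r))) (gsum 0 (2 ^ r) (zpow (cexpi x)))))
   with (Cmult (RtoC (/ sqrt (2 ^ r))) (Cmult (Cminus (RtoC 1) (cexpi x)) (gsum 0 (2 ^ r) (zpow (cexpi x))))) by ring.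
  rewrite geo, nrm2_mult, nrm2_RtoC. replace (0 + 2 ^ r)%nat with (2 ^ r)%nat by lia.
  change (zpow (cexpi x) 0) with (RtoC 1). rewrite <- cexpi_nat, nrm2_1m.
  assert (0 < 2 ^ r) by (apply pow_lt; lra).
  rewrite pow_inv. rewrite <- (Rsqr_pow2 (sqrt _)), Rsqr_sqrt by lra. ring.
Qed.

Lemma psi_zero r :
  nrm2 (csum (2 ^ r) (fun t => Cmult (haar_psi r t) (zpow (RtoC 1) t))) = INR (2 ^ r).
Proof.
  change (csum (2 ^ r) ?f) with (gsum 0 (2 ^ r) f). unfold haar_psi.
  assert (K: forall t, zpow (RtoC 1) t = RtoC 1).
  { induction t; simpl; [reflexivity| rewrite IHt; ring]. }
  rewrite (gsum_ext _ _ _ (fun _ => RtoC (/ sqrt (2 ^ r)))) by (intros; rewrite K; ring).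
  rewrite gsum_const, nrm2_mult, !nrm2_RtoC, INR_2pow.
  assert (0 < 2 ^ r) by (apply pow_lt; lra).
  rewrite pow_inv. rewrite <- (Rsqr_pow2 (sqrt _)), Rsqr_sqrt by lra. field. lra.
Qed.
Lemma pow2_pos x : x <> 0 -> 0 < x ^ 2.
Proof. intros H. pose proof (Rsqr_pos_lt x H). unfold Rsqr in *. nra. Qed.

Lemma phi_real N L J Dd w Q V W :
  0 < L -> 0 < J -> 0 < N -> 0 < Dd -> w <> 0 -> J ^ 2 <= 4 * w ^ 2 -> w ^ 2 <= J ^ 2 ->
  (2 * PI * w / N) ^ 2 / 9 <= W ->
  V <= (2 * PI * w / N * (N / (2 * L))) ^ 2 -> V <= 4 -> 0 <= V -> 0 <= Q ->
  W * Q = (L / N) * V ^ 2 ->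
  ((J <= L /\ J * Dd = L) \/ (L < J /\ L * Dd = J)) ->
  Q / N <= 200 / (J * Dd).
Proof.
  intros HL HJ HN HD Hw HJ1 HJ2 HW HV1 HV2 HV3 HQ HE Hc.
  pose proof PI_RGT_0 as Hpi. pose proof PI2_1 as Hpi2. pose proof PI_4 as Hpi4.
  set (th := 2 * PI * w / N) in *.
  assert (Hth : 0 < th ^ 2).
  { unfold th. apply pow2_pos. intro H. unfold Rdiv in H.
    apply Rmult_integral in H. destruct H as [H|H].
    - apply Rmult_integral in H; destruct H; [lra| contradiction].
    - pose proof (Rinv_neq_0_compat N ltac:(lra)). contradiction. }
  assert (HQW : th ^ 2 / 9 * Q <= L / N * V ^ 2).
  { rewrite <- HE. apply Rmult_le_compat_r; lra. }
  assert (HLN : 0 < L / N) by (apply Rdiv_lt_0_compat; lra).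
  destruct Hc as [[Hjl HDd] | [Hjl HDd]].
  - set (hh := N / (2 * L)) in *.
    assert (HV4 : V ^ 2 <= (th * hh) ^ 4).
    { replace ((th * hh) ^ 4) with (((th*hh)^2)^2) by ring. apply pow_incr; lra. }
    assert (H1 : th ^ 2 / 9 * Q <= L / N * (th * hh) ^ 4).
    { eapply Rle_trans; [exact HQW|]. apply Rmult_le_compat_l; lra. }
    assert (H2 : Q <= 9 * (L / N) * th ^ 2 * hh ^ 4).
    { apply (Rmult_le_reg_l (th ^ 2 / 9)). lra.
      eapply Rle_trans; [exact H1|]. right. field; lra. }
    assert (H3 : 9 * (L / N) * th ^ 2 * hh ^ 4 / N = 9 * PI ^ 2 * w ^ 2 / (4 * L ^ 3)).
    { unfold hh, th. field. lra. }
    assert (H4 : Q / N <= 9 * PI ^ 2 * w ^ 2 / (4 * L ^ 3)).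
    { rewrite <- H3. unfold Rdiv at 1 2. apply Rmult_le_compat_r; [left; apply Rinv_0_lt_compat; lra| lra]. }
    eapply Rle_trans; [exact H4|]. rewrite HDd.
    assert (PI ^ 2 <= 16) by nra.
    assert (J ^ 2 <= L ^ 2) by nra.
    apply (Rmult_le_reg_r (4 * L ^ 3)). apply Rmult_lt_0_compat; [lra| apply pow_lt; lra].
    replace (9 * PI ^ 2 * w ^ 2 / (4 * L ^ 3) * (4 * L ^ 3)) with (9 * PI ^ 2 * w ^ 2) by (field; lra).
    replace (200 / L * (4 * L ^ 3)) with (800 * L ^ 2) by (field; lra).
    assert (PI ^ 2 * w ^ 2 <= 16 * J ^ 2).
    { apply Rmult_le_compat; try apply pow2_ge_0; lra. }
    nra.
  - assert (H1 : th ^ 2 / 9 * Q <= L / N * 16).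
    { eapply Rle_trans; [exact HQW|]. apply Rmult_le_compat_l; [lra|]. nra. }
    assert (H2 : Q <= 144 * (L / N) / th ^ 2).
    { apply (Rmult_le_reg_l (th ^ 2 / 9)). lra.
      eapply Rle_trans; [exact H1|]. right. field. split; [lra| intro Hz; rewrite Hz in Hth; lra]. }
    assert (H3 : 144 * (L / N) / th ^ 2 / N = 36 * L / (PI ^ 2 * w ^ 2)).
    { unfold th. field. split; [lra|]. split; [lra| ]. lra. }
    assert (H4 : Q / N <= 36 * L / (PI ^ 2 * w ^ 2)).
    { rewrite <- H3. unfold Rdiv at 1 2. apply Rmult_le_compat_r; [left; apply Rinv_0_lt_compat; lra| lra]. }
    eapply Rle_trans; [exact H4|].
    assert (Hw2 : 0 < w ^ 2) by (apply pow2_pos; exact Hw).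
    assert (1 <= PI ^ 2) by nra.
    assert (Dd = J / L) by (rewrite <- HDd; field; lra). rewrite H0.
    replace (200 / (J * (J / L))) with (200 * L / J ^ 2) by (field; lra).
    apply (Rmult_le_reg_r (PI ^ 2 * w ^ 2 * J ^ 2)).
    { apply Rmult_lt_0_compat; [nra| apply pow_lt; lra]. }
    replace (36 * L / (PI ^ 2 * w ^ 2) * (PI ^ 2 * w ^ 2 * J ^ 2)) with (36 * L * J ^ 2) by (field; nra).
    replace (200 * L / J ^ 2 * (PI ^ 2 * w ^ 2 * J ^ 2)) with (200 * L * (PI ^ 2 * w ^ 2)) by (field; lra).
    assert (J ^ 2 <= 4 * (PI ^ 2 * w ^ 2)) by nra.
    nra.
Qed.

Lemma in_zrange x a b : In x (zrange a b) -> (a <= x <= b)%Z.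
Proof.
  unfold zrange. intros H. apply in_map_iff in H. destruct H as [k [Hk Hin]].
  apply in_seq in Hin. destruct (Z_le_gt_dec a (b)) ; lia.
Qed.

Lemma band_dec j w : In w (band j) ->
  (w = 0%Z /\ j = 0%nat) \/
  (w <> 0%Z /\ (2 ^ Z.of_nat j <= 2 * Z.abs w)%Z /\ (Z.abs w <= 2 ^ Z.of_nat j)%Z).
Proof.
  destruct j as [|j]; intros H; unfold band in H; cbv beta iota in H.
  - destruct H as [H|[H|[]]]; [left; lia| right; subst; simpl; lia].
  - right.
    replace (Z.of_nat (S j) - 1)%Z with (Z.of_nat j) in H by lia.
    assert (E : (2 ^ Z.of_nat (S j) = 2 * 2 ^ Z.of_nat j)%Z).
    { rewrite Nat2Z.inj_succ, Z.pow_succ_r by lia. ring. }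
    rewrite E in *. assert (0 < 2 ^ Z.of_nat j)%Z by (apply Z.pow_pos_nonneg; lia).
    apply in_app_or in H. destruct H as [H|H]; apply in_zrange in H; lia.
Qed.

Definition dd (j l : nat) : nat := Z.abs_nat (Z.of_nat j - Z.of_nat l).

Lemma pow2R_pos k : 0 < 2 ^ k.
Proof. apply pow_lt; lra. Qed.

Lemma entry r j l v w : (1 <= r)%nat -> (j < r)%nat -> (l < r)%nat ->
  In v (level_vectors r l) -> In w (band j) ->
  nrm2 (dft r v w) <= 200 / (2 ^ j * 2 ^ dd j l).
Proof.
  intros Hr Hj Hl Hv Hw.
  rewrite nrm2_dft.
  assert (HN := pow2R_pos r). assert (HJ := pow2R_pos j). assert (HL := pow2R_pos l).
  assert (HD := pow2R_pos (dd j l)).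
  assert (Hpos : 0 < 200 / (2 ^ j * 2 ^ dd j l)).
  { apply Rdiv_lt_0_compat; [lra| apply Rmult_lt_0_compat; lra]. }
  assert (Hphi : forall p, ((p + 1) * 2 ^ (r - l) <= 2 ^ r)%nat ->
     nrm2 (csum (2 ^ r) (fun t => Cmult (haar_phi r l p t) (zpow (cexpi (th r w)) t))) / 2 ^ r
       <= 200 / (2 ^ j * 2 ^ dd j l)).
  { intros p Hp.
    set (h := (2 ^ (r - l - 1))%nat).
    assert (HB : (2 ^ (r - l) = 2 * h)%nat).
    { unfold h. replace (r - l)%nat with (S (r - l - 1)) at 1 by lia. reflexivity. }
    destruct (band_dec j w Hw) as [[-> ->] | [Hw0 [Hw1 Hw2]]].
    - unfold th. rewrite Rmult_0_r, Rdiv_0_l, cexpi_0.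
      rewrite (phi_zero r l p h HB Hp), nrm2_RtoC.
      replace (0 ^ 2 / 2 ^ r) with 0 by (field; lra). lra.
    - pose proof (phi_W r l p h (th r w) HB Hp) as E.
      set (Q := nrm2 _) in *.
      assert (Hhl : (h * 2 * 2 ^ l = 2 ^ r)%nat).
      { replace (h * 2)%nat with (2 ^ (r - l))%nat by lia.
        rewrite <- Nat.pow_add_r. f_equal. lia. }
      assert (HhR : INR h = 2 ^ r / (2 * 2 ^ l)).
      { apply (f_equal INR) in Hhl. rewrite !mult_INR, !INR_2pow in Hhl. simpl (INR 2) in Hhl.
        field_simplify_eq; [|lra]. lra. }
      assert (Hth : th r w = 2 * PI * IZR w / 2 ^ r) by (unfold th; rewrite INR_2pow; reflexivity).
      assert (HJw1 : 2 ^ j <= 2 * Rabs (IZR w)).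
      { rewrite pow_IZR, Rabs_Zabs. replace 2 with (IZR 2) at 2 by reflexivity.
        rewrite <- mult_IZR. apply IZR_le. exact Hw1. }
      assert (HJw2 : Rabs (IZR w) <= 2 ^ j).
      { rewrite pow_IZR, Rabs_Zabs. apply IZR_le. exact Hw2. }
      assert (HJr : 2 * 2 ^ j <= 2 ^ r).
      { change (2 * 2 ^ j) with (2 ^ S j). apply Rle_pow; [lra| lia]. }
      assert (Habs : Rabs (th r w) <= PI).
      { rewrite Hth. unfold Rdiv. rewrite !Rabs_mult, Rabs_inv, (Rabs_right 2), Rabs_right, (Rabs_right (2 ^ r)) by (pose proof PI_RGT_0; lra).
        apply (Rmult_le_reg_r (2 ^ r)); [lra|]. field_simplify; [|lra]. pose proof PI_RGT_0. nra. }
      assert (Hw0R : IZR w <> 0) by (apply not_0_IZR; exact Hw0).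
      apply (phi_real (2 ^ r) (2 ^ l) (2 ^ j) (2 ^ dd j l) (IZR w) Q
               (2 - 2 * cos (th r w * INR h)) (2 - 2 * cos (th r w))); try lra.
      + rewrite <- (pow2_abs (IZR w)). nra.
      + rewrite <- (pow2_abs (IZR w)). pose proof (Rabs_pos (IZR w)). nra.
      + rewrite <- Hth. apply T3. exact Habs.
      + rewrite <- Hth, <- HhR. apply T1.
      + apply T2.
      + apply T0.
      + apply nrm2_ge0.
      + unfold dd. destruct (le_lt_dec j l) as [Hjl|Hjl].
        * left. split; [apply Rle_pow; [lra|lia]|].
          rewrite <- pow_add. f_equal. lia.
        * right. split; [apply Rlt_pow; [lra|lia]|].
          rewrite <- pow_add. f_equal. lia. }
  destruct l as [|l'].
  - simpl in Hv. destruct Hv as [<-|[<-|[]]].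
    +
      destruct (band_dec j w Hw) as [[-> ->] | [Hw0 [Hw1 Hw2]]].
      * unfold th. rewrite Rmult_0_r, Rdiv_0_l, cexpi_0, psi_zero, INR_2pow.
        unfold dd; simpl. replace (2 ^ r / 2 ^ r) with 1 by (field; lra). lra.
      * pose proof (psi_W r (th r w)) as E.
        set (Q := nrm2 _) in *.
        assert (Hc : cos (th r w * INR (2 ^ r)) = 1).
        { unfold th. replace (2 * PI * IZR w / INR (2 ^ r) * INR (2 ^ r)) with (2 * PI * IZR w)
            by (field; rewrite INR_2pow; lra).
          pose proof (cexpi_2pik w) as C. unfold cexpi in C. injection C as C1 C2. exact C1. }
        rewrite Hc in E. replace (2 - 2 * 1) with 0 in E by ring. rewrite Rmult_0_r in E.
        assert (Hth : th r w = 2 * PI * IZR w / 2 ^ r) by (unfold th; rewrite INR_2pow; reflexivity).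
        assert (HJw2 : Rabs (IZR w) <= 2 ^ j).
        { rewrite pow_IZR, Rabs_Zabs. apply IZR_le. exact Hw2. }
        assert (HJr : 2 * 2 ^ j <= 2 ^ r).
        { change (2 * 2 ^ j) with (2 ^ S j). apply Rle_pow; [lra| lia]. }
        assert (Habs : Rabs (th r w) <= PI).
        { rewrite Hth. unfold Rdiv. rewrite !Rabs_mult, Rabs_inv, (Rabs_right 2), Rabs_right, (Rabs_right (2 ^ r)) by (pose proof PI_RGT_0; lra).
          apply (Rmult_le_reg_r (2 ^ r)); [lra|]. field_simplify; [|lra]. pose proof PI_RGT_0. nra. }
        assert (Hw0R : IZR w <> 0) by (apply not_0_IZR; exact Hw0).
        assert (Hthnz : th r w <> 0).
        { rewrite Hth. unfold Rdiv. intro Hz. apply Rmult_integral in Hz. destruct Hz as [Hz|Hz].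
          - apply Rmult_integral in Hz. pose proof PI_RGT_0. destruct Hz; [lra|contradiction].
          - apply (Rinv_neq_0_compat (2 ^ r)); lra. }
        pose proof (T3 _ Habs) as HW. pose proof (pow2_pos _ Hthnz).
        assert (HQ0 : Q = 0).
        { pose proof (nrm2_ge0 (csum (2 ^ r) (fun t => Cmult (haar_psi r t) (zpow (cexpi (th r w)) t)))) as HQ.
          fold Q in HQ. nra. }
        rewrite HQ0. replace (0 / 2 ^ r) with 0 by (field; lra). lra.
    + apply Hphi. simpl. rewrite Nat.sub_0_r. lia.
  - change (In v (map (fun p => haar_phi r (S l') p) (seq 0 (2 ^ S l')))) in Hv. apply in_map_iff in Hv. destruct Hv as [p [<- Hp]].
    apply in_seq in Hp. apply Hphi.
    assert (E : (2 ^ S l' = 2 ^ S l' )%nat) by reflexivity.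
    assert ((p + 1) <= 2 ^ S l')%nat by lia.
    replace (2 ^ r)%nat with (2 ^ S l' * 2 ^ (r - S l'))%nat by (rewrite <- Nat.pow_add_r; f_equal; lia).
    apply Nat.mul_le_mono_r. lia.
Qed.

Lemma lmax_le s M : 0 <= M -> (forall x, In x s -> x <= M) -> lmax s <= M.
Proof.
  intros HM; induction s as [|a s IH]; intros H; simpl; [lra|].
  apply Rmax_lub; [apply H; left; reflexivity| apply IH; intros; apply H; right; assumption].
Qed.

Lemma lmax_ge0 s : 0 <= lmax s.
Proof. induction s; simpl; [lra|]. eapply Rle_trans; [exact IHs| apply Rmax_r]. Qed.

Lemma block_le r j l : (1 <= r)%nat -> (j < r)%nat -> (l < r)%nat ->
  block_coherence r j l <= 200 / (2 ^ j * 2 ^ dd j l).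
Proof.
  intros Hr Hj Hl. unfold block_coherence. apply lmax_le.
  { left. apply Rdiv_lt_0_compat; [lra| apply Rmult_lt_0_compat; apply pow2R_pos]. }
  intros x Hx. apply in_flat_map in Hx. destruct Hx as [w [Hw Hx]].
  apply in_map_iff in Hx. destruct Hx as [v [<- Hv]].
  rewrite nrm2_Cmod. apply entry; assumption.
Qed.

Theorem lemma2 :
  exists Cst : R, 0 < Cst /\
    forall r j l : nat, (1 <= r)%nat -> (j < r)%nat -> (l < r)%nat ->
      local_coherence r j l <=
        Cst * Rpower 2 (- INR j) * Rpower 2 (- IZR (Z.abs (Z.of_nat j - Z.of_nat l)) / 2).
Proof.
  exists 200. split; [lra|]. intros r j l Hr Hj Hl.
  assert (HJ := pow2R_pos j). assert (HD := pow2R_pos (dd j l)).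
  assert (E1 : Rpower 2 (- INR j) = / 2 ^ j) by (rewrite Rpower_Ropp, Rpower_pow by lra; reflexivity).
  assert (E2 : Rpower 2 (- IZR (Z.abs (Z.of_nat j - Z.of_nat l)) / 2) = / sqrt (2 ^ dd j l)).
  { rewrite <- Nat2Z.inj_abs_nat, <- INR_IZR_INZ. fold (dd j l).
    replace (- INR (dd j l) / 2) with (- (INR (dd j l) * / 2)) by (unfold Rdiv; ring).
    rewrite Rpower_Ropp, <- Rpower_mult, Rpower_pow, Rpower_sqrt by lra. reflexivity. }
  rewrite E1, E2. unfold local_coherence.
  set (A := 200 / 2 ^ j).
  assert (HA : 0 < A) by (unfold A; apply Rdiv_lt_0_compat; lra).
  assert (H1 : sqrt (block_coherence r j l) <= sqrt A * / sqrt (2 ^ dd j l)).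
  { rewrite <- sqrt_inv, <- sqrt_mult_alt by lra. apply sqrt_le_1_alt.
    eapply Rle_trans; [apply block_le; assumption|]. right. unfold A. field. lra. }
  assert (H2 : lmax (map (fun l' => sqrt (block_coherence r j l')) (seq 0 r)) <= sqrt A).
  { apply lmax_le; [apply sqrt_pos|]. intros x Hx. apply in_map_iff in Hx.
    destruct Hx as [l' [<- Hl']]. apply in_seq in Hl'. apply sqrt_le_1_alt.
    eapply Rle_trans; [apply block_le; lia|]. unfold A.
    assert (1 <= 2 ^ dd j l') by (apply pow_R1_Rle; lra).
    unfold Rdiv. apply Rmult_le_compat_l; [lra|]. apply Rinv_le_contravar; [lra|].
    rewrite <- (Rmult_1_r (2 ^ j)) at 1. apply Rmult_le_compat_l; lra. }
  assert (0 < sqrt (2 ^ dd j l)) by (apply sqrt_lt_R0; lra).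
  apply Rle_trans with ((sqrt A * / sqrt (2 ^ dd j l)) * sqrt A).
  { apply Rmult_le_compat; [apply sqrt_pos| apply lmax_ge0| exact H1| exact H2]. }
  replace (sqrt A * / sqrt (2 ^ dd j l) * sqrt A) with ((sqrt A * sqrt A) * / sqrt (2 ^ dd j l)) by ring.
  rewrite sqrt_sqrt by lra. unfold A. right. field. lra.
Qed.
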